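(* Let $\kappa$ be an infinite cardinal, let $(G_\alpha:\alpha<\kappa)$ be topological groups, let $G=\prod_{\alpha<\kappa}G_\alpha$ with the product topology and coordinatewise operation, and let $X\subseteq G$. Then the following are equivalent: (1) $X$ is Rothberger bounded in $G$; (2) for each countable set $C\subseteq\kappa$, the set $X_C=\{f\restriction C:f\in X\}$ is a Rothberger bounded subset of $G_C=\prod_{\alpha\in C}G_\alpha$.
   Context: All topological groups are assumed Tychonoff. A subset $X$ of a topological group $(H,* )$ is Rothberger bounded if for every sequence $(U_n:n<\omega)$ of open neighborhoods of the identity there are $h_n\in H$ with $X\subseteq\bigcup_n h_n*U_n$. *)

(* Defs.v *)
From HB Require Import structures.
From mathcomp Require Import all_boot all_order all_algebra.
From mathcomp Require Import all_classical all_reals all_analysis.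
Set Implicit Arguments. Unset Strict Implicit. Unset Printing Implicit Defensive.
Local Open Scope classical_set_scope.

(* For topological groups, Hausdorff (even T0) is equivalent to Tychonoff,
   so we record the separation assumption as [hausdorff_space]. *)
Record topGroup := TopGroup {
  tg_carrier :> topologicalType;
  tg_mul : tg_carrier -> tg_carrier -> tg_carrier;
  tg_inv : tg_carrier -> tg_carrier;
  tg_one : tg_carrier;
  tg_mulA : forall x y z, tg_mul x (tg_mul y z) = tg_mul (tg_mul x y) z;
  tg_mul1g : forall x, tg_mul tg_one x = x;
  tg_mulg1 : forall x, tg_mul x tg_one = x;
  tg_mulVg : forall x, tg_mul (tg_inv x) x = tg_one;
  tg_mulgV : forall x, tg_mul x (tg_inv x) = tg_one;
  tg_mul_cont : continuous (fun p : tg_carrier * tg_carrier => tg_mul p.1 p.2);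
  tg_inv_cont : continuous tg_inv;
  tg_hausdorff : hausdorff_space tg_carrier
}.

Definition rothberger_bounded (H : topologicalType) (mul : H -> H -> H)
  (one : H) (X : set H) : Prop :=
  forall U : nat -> set H, (forall n, open_nbhs one (U n)) ->
  exists h : nat -> H,
    X `<=` \bigcup_(n in [set: nat]) [set mul (h n) u | u in U n].

Definition prodG (I : Type) (G : I -> topGroup) : topologicalType :=
  prod_topology (fun i => tg_carrier (G i)).

Definition prod_mul (I : Type) (G : I -> topGroup)
  (f g : prodG G) : prodG G := fun i => tg_mul (f i) (g i).
Definition prod_one (I : Type) (G : I -> topGroup) : prodG G :=
  fun i => tg_one (G i).

Definition restr (I : Type) (G : I -> topGroup) (C : set I)
  (f : prodG G) : prodG (fun c : C => G (val c)) := fun c => f (val c).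

(* Main.v *)
Require Import Defs.
From HB Require Import structures.
From mathcomp Require Import all_boot all_order all_algebra.
From mathcomp Require Import all_classical all_reals all_analysis.
From mathcomp Require Import finmap.
Local Open Scope classical_set_scope.

Lemma nbhs_basic (I:Type) (K : I -> topologicalType) (x : prod_topology K)
  (U : set (prod_topology K)) : nbhs x U ->
  exists S : set I, countable S /\ exists W : set (prod_topology K),
   [/\ open W, W x, W `<=` U &
   forall y z : prod_topology K, (forall i, S i -> y i = z i) -> W y -> W z].
Proof.
move=> [P [[Q QfinP <-] [V JV Vpz]] PU].
have [L Lsub VL] := QfinP _ JV.
have : forall M : finmap.fset_sub_type L, exists i, exists2 N : set (K i), open N & (fun f : prod_topology K => f i) @^-1` N = finmap.fsval M.
  move=> M; have := Lsub _ (finmap.fsvalP M).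
  move/set_mem => -[i _ [N oN NM]]; exists i; exists N => //.
move=> /choice[idx Hidx].
exists (range idx); split.
  apply: (sub_countable (card_image_le _ _)).
  exact: countableP.
exists V; split.
- exists [set V].
  + by move=> _ ->; exact: QfinP.
  + by rewrite bigcup_set1.
- done.
- by move=> y Vy; apply: PU; exists V.
- move=> y z yz; rewrite -VL => Hy M LM.
  have := Hy M LM.
  have [N _ HN] := Hidx (finmap.FSetSub LM).
  rewrite /= in HN; rewrite -HN /= yz //.
Qed.
Lemma proj_cont (I:Type) (K : I -> topologicalType) (i : I) :
  continuous (fun f : prod_topology K => f i).
Proof. exact: (@proj_continuous {classic I} K i). Qed.

Lemma into_prod (I:Type) (K : I -> topologicalType) (T : topologicalType)
  (e : T -> prod_topology K) : (forall i, continuous (fun t => e t i)) -> continuous e.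
Proof.
move=> H t.
apply/cvg_sup => i U [V] [[W] oW <-] WfN WU.
apply: (filterS WU).
have := H i t W.
apply; exact: open_nbhs_nbhs.
Qed.

Section Main.
Variables (I : Type) (G : I -> topGroup).

Definition ext (C : set I) (g : prodG (fun c : C => G (val c))) : prodG G :=
  fun i => match pselect (C i) with
           | left H => g (exist _ i (mem_set H))
           | right _ => tg_one (G i) end.

Lemma ext_cont (C : set I) : continuous (@ext C).
Proof.
apply: into_prod => i; rewrite /ext; case: (pselect (C i)) => H.
  exact: (@proj_cont C (fun c : C => G (val c)) (exist _ i (mem_set H))).
exact: cst_continuous.
Qed.

Lemma restr_cont (C : set I) : continuous (@restr I G C).
Proof.
apply: into_prod => c; exact: (@proj_cont I (fun i => G i) (val c)).
Qed.

Lemma ext_one (C : set I) : @ext C (prod_one (fun c : C => G (val c))) = prod_one G.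
Proof. by apply: functional_extensionality_dep => i; rewrite /ext; case: pselect. Qed.

End Main.

Theorem lemma4 (I : Type) (hI : infinite_set [set: I]) (G : I -> topGroup)
  (X : set (prodG G)) :
  rothberger_bounded (@prod_mul I G) (prod_one G) X <->
  (forall C : set I, countable C ->
     rothberger_bounded (@prod_mul C (fun c => G (val c)))
       (prod_one (fun c : C => G (val c))) (@restr I G C @` X)).
Proof.
split.
- move=> HX C _ V oV.
  have [h Hh] := HX (fun n => @restr I G C @^-1` V n) (fun n =>
    conj (open_comp (fun x _ => @restr_cont I G C x) (proj1 (oV n))) (proj2 (oV n))).
  exists (fun n => @restr I G C (h n)) => _ [f Xf <-].
  have [n _ [u Uu <-]] := Hh f Xf.
  by exists n => //; exists (@restr I G C u).
- move=> HC U oU.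
  have : forall n, exists S : set I, countable S /\ exists W : set (prodG G),
   [/\ open W, W (prod_one G), W `<=` U n &
   forall y z : prodG G, (forall i, S i -> y i = z i) -> W y -> W z].
    by move=> n; apply: nbhs_basic; apply: open_nbhs_nbhs.
  move=> /choice[S HS].
  have : forall n, exists W : set (prodG G),
   [/\ open W, W (prod_one G), W `<=` U n &
   forall y z : prodG G, (forall i, S n i -> y i = z i) -> W y -> W z].
    by move=> n; case: (HS n).
  move=> /choice[W HW].
  pose C := \bigcup_n S n.
  have cC : countable C.
    by apply: bigcup_countable => // n _; case: (HS n).
  have [h' Hh'] := HC C cC (fun n => @ext I G C @^-1` W n) (fun n =>
    conj (open_comp (fun x _ => @ext_cont I G C x) (let: And4 o _ _ _ := HW n in o))
         (let: And4 _ w _ _ := HW n in eq_rect_r (W n) w (@ext_one I G C))).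
  exists (fun n => @ext I G C (h' n)) => f Xf.
  have [n _ [v Vv Ev]] := Hh' (@restr I G C f) (ex_intro2 _ _ f Xf erefl).
  case: (HW n) => _ _ WU Wdet.
  exists n => //.
  exists (fun i => tg_mul (tg_inv (@ext I G C (h' n) i)) (f i)).
    apply: WU; apply: (Wdet _ _ _ Vv) => i Si.
    have Ci : C i by exists n.
    rewrite /ext; case: pselect => [H|//].
    have := congr1 (fun g => g (exist _ i (mem_set H))) Ev.
    rewrite /= /prod_mul /restr /= => <-.
    by rewrite tg_mulA tg_mulVg tg_mul1g.
  apply: functional_extensionality_dep => i.
  by rewrite /prod_mul tg_mulA tg_mulgV tg_mul1g.
Qed.
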